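(* Let $a,b,c,d\geq 1$ be integers and $$M=\begin{pmatrix} a & b\\ c & d\end{pmatrix}.$$ Then $\mathrm{Cat}(M)\neq\emptyset$ in each of the following cases: (1) $a=b=c=d=1$; (2) $a=1$ and $d>bc$; (3) $d=1$ and $a>bc$; (4) $a>1$ and $d>1$. In all other cases $\mathrm{Cat}(M)=\emptyset$.
   Context: For an $n\times n$ matrix $M=(m_{ij})$ with entries in the natural numbers, $\mathrm{Cat}(M)$ denotes the collection of categories $A$ with exactly $n$ distinct objects $x_1,\dots,x_n$ such that $|A(x_i,x_j)|=m_{ij}$ for all $i,j$, where $A(x_i,x_j)$ is the set of morphisms from $x_i$ to $x_j$. *)

(* Defs.v *)
From mathcomp Require Import all_boot all_algebra.
Set Implicit Arguments. Unset Strict Implicit. Unset Printing Implicit Defensive.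

(* Composition is written in diagrammatic order: comp f g = g o f. *)
Record cat_on (n : nat) := CatOn {
  Hom : 'I_n -> 'I_n -> finType;
  idm : forall i, Hom i i;
  comp : forall i j k, Hom i j -> Hom j k -> Hom i k;
  comp_id_l : forall i j (f : Hom i j), comp (idm i) f = f;
  comp_id_r : forall i j (f : Hom i j), comp f (idm j) = f;
  comp_assoc : forall i j k l (f : Hom i j) (g : Hom j k) (h : Hom k l),
      comp (comp f g) h = comp f (comp g h)
}.

Definition Cat_nonempty (n : nat) (M : 'M[nat]_n) : Prop :=
  exists C : cat_on n, forall i j : 'I_n, #|Hom C i j| = M i j.

Definition mx2 (a b c d : nat) : 'M[nat]_2 :=
  \matrix_(i < 2, j < 2)
    if (i == 0 :> nat) then (if (j == 0 :> nat) then a else b)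
    else (if (j == 0 :> nat) then c else d).

(* Main.v *)
Require Import Defs.
From mathcomp Require Import all_boot all_algebra zify.
Set Implicit Arguments. Unset Strict Implicit. Unset Printing Implicit Defensive.

Lemma build_cat n (M : 'M[nat]_n) (F : nat -> nat -> nat -> nat -> nat -> nat) :
 (forall i : 'I_n, 0 < M i i) ->
 (forall (i j k : 'I_n) f g, f < M i j -> g < M j k -> F i j k f g < M i k) ->
 (forall (i j : 'I_n) f, f < M i j -> F i i j 0 f = f) ->
 (forall (i j : 'I_n) f, f < M i j -> F i j j f 0 = f) ->
 (forall (i j k l : 'I_n) f g h, f < M i j -> g < M j k -> h < M k l ->
     F i k l (F i j k f g) h = F i j l f (F j k l g h)) ->
 Cat_nonempty M.
Proof.
move=> Hid Hb Hl Hr Ha.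
pose Hm := fun i j : 'I_n => ordinal (M i j).
pose idm := fun i : 'I_n => Ordinal (Hid i) : Hm i i.
pose comp := fun (i j k : 'I_n) (f : Hm i j) (g : Hm j k) =>
   Ordinal (Hb i j k f g (ltn_ord f) (ltn_ord g)) : Hm i k.
have cl : forall i j (f : Hm i j), comp i i j (idm i) f = f.
  by move=> i j f; apply: val_inj => /=; apply: Hl.
have cr : forall i j (f : Hm i j), comp i j j f (idm j) = f.
  by move=> i j f; apply: val_inj => /=; apply: Hr.
have ca : forall i j k l (f : Hm i j) (g : Hm j k) (h : Hm k l),
   comp i k l (comp i j k f g) h = comp i j l f (comp j k l g h).
  by move=> i j k l f g h; apply: val_inj => /=; apply: Ha.
exists (@CatOn n Hm idm comp cl cr ca) => i j /=.
by rewrite card_ord.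
Qed.

Lemma swap_cat (M : 'M[nat]_2) (s : 'I_2 -> 'I_2) :
  Cat_nonempty M -> Cat_nonempty (\matrix_(i, j) M (s i) (s j)).
Proof.
case=> C HC.
exists (@CatOn 2 (fun i j => Defs.Hom C (s i) (s j)) (fun i => Defs.idm C (s i))
   (fun i j k f g => Defs.comp f g) (fun i j f => Defs.comp_id_l f) (fun i j f => Defs.comp_id_r f)
   (fun i j k l f g h => Defs.comp_assoc f g h)) => i j /=.
by rewrite mxE HC.
Qed.

Lemma mx2E a b c d (i j : 'I_2) : mx2 a b c d i j =
  match val i, val j with 0, 0 => a | 0, _ => b | _, 0 => c | _, _ => d end.
Proof. by rewrite mxE; case: i => [[|[|i]] Hi]; case: j => [[|[|j]] Hj]. Qed.

Definition F4 (i j k f g : nat) : nat :=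
  if (i == j) && (f == 0) then g else if (j == k) && (g == 0) then f else (i == k : nat).

Lemma case4 a b c d : 1 < a -> 1 <= b -> 1 <= c -> 1 < d -> Cat_nonempty (mx2 a b c d).
Proof.
move=> Ha Hb Hc Hd.
apply: (@build_cat 2 _ F4).
- by move=> [[|[|i]] Hi] //; rewrite mx2E /= ltnW.
- move=> [[|[|i]] Hi] // [[|[|j]] Hj] // [[|[|k]] Hk] // f g;
  rewrite !mx2E /F4 /=; case: f => [|f]; case: g => [|g] //=.
- by move=> [[|[|i]] Hi] // [[|[|j]] Hj] // f; rewrite /F4 /= eqxx.
- move=> [[|[|i]] Hi] // [[|[|j]] Hj] // [|f] //; rewrite /F4 /= ?eqxx ?andbF //.
- move=> [[|[|i]] Hi] // [[|[|j]] Hj] // [[|[|k]] Hk] // [[|[|l]] Hl] // f g h _ _ _;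
  rewrite /F4 /=; case: f => [|f]; case: g => [|g]; case: h => [|h] //=.
Qed.

Section C2.
Variables b c : nat.
Definition pj n := if n <= b * c then n.-1 %/ b else 0.
Definition pi n := if n <= b * c then n.-1 %% b else 0.

Definition F2 (i j k f g : nat) : nat :=
 if i == 0 then (if j == 0 then (if k == 0 then 0 else g)
                 else (if k == 0 then 0 else (if g == 0 then f else pi g)))
 else (if j == 0 then (if k == 0 then f else (f * b + g).+1)
       else (if k == 0 then (if f == 0 then g else pj f)
             else (if f == 0 then g else if g == 0 then f else (pj f * b + pi g).+1))).

Hypothesis Hb : 0 < b.
Hypothesis Hc : 0 < c.

Lemma core_lt x y : x < c -> y < b -> x * b + y < b * c.
Proof.
move=> hx hy; nia.
Qed.

Lemma pjE x y : x < c -> y < b -> pj (x * b + y).+1 = x.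
Proof.
move=> hx hy; rewrite /pj core_lt //= divnMDl // divn_small // addn0 // .
Qed.

Lemma piE x y : x < c -> y < b -> pi (x * b + y).+1 = y.
Proof.
move=> hx hy; rewrite /pi core_lt //= modnMDl modn_small //.
Qed.

Lemma pj_lt n : pj n < c.
Proof.
rewrite /pj; case: ifP => // h; rewrite ltn_divLR // mulnC.
case: n h => [|n] h /=; nia.
Qed.

Lemma pi_lt n : pi n < b.
Proof. by rewrite /pi; case: ifP => // _; rewrite ltn_mod. Qed.
End C2.

Lemma case2 b c d : 1 <= b -> 1 <= c -> b * c < d -> Cat_nonempty (mx2 1 b c d).
Proof.
move=> Hb Hc Hd.
have Hd1 : 0 < d by apply: leq_ltn_trans Hd.
apply: (@build_cat 2 _ (F2 b c)).
- by move=> [[|[|i]] Hi] //; rewrite mx2E.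
- move=> [[|[|i]] Hi] // [[|[|j]] Hj] // [[|[|k]] Hk] // f g;
  rewrite !mx2E /F2 /= => hf hg.
  all: try (case: (g =P 0) => //= _); try (case: (f =P 0) => //= _).
  all: try (exact: pi_lt); try (exact: pj_lt).
  all: try (apply: leq_ltn_trans Hd; apply: core_lt => //; [exact: pj_lt | exact: pi_lt]).
  all: try (apply: leq_ltn_trans Hd; exact: core_lt).

- move=> [[|[|i]] Hi] // [[|[|j]] Hj] // f; rewrite mx2E /F2 /=.
  all: try by case: f.
- move=> [[|[|i]] Hi] // [[|[|j]] Hj] // f; rewrite mx2E /F2 /=.
  all: try by case: f.
- move=> [[|[|i]] Hi] // [[|[|j]] Hj] // [[|[|k]] Hk] // [[|[|l]] Hl] // f g h;
  rewrite !mx2E /F2 /= => hf hg hh.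
  all: case: f hf => [|f] hf; case: g hg => [|g] hg; case: h hh => [|h] hh => //=.
  all: rewrite ?pjE ?piE ?pj_lt ?pi_lt //.
Qed.

Lemma nec b c d : Cat_nonempty (mx2 1 b c d) -> (d = 1 /\ b = 1 /\ c = 1) \/ b * c < d.
Proof.
case=> C HC.
pose x : 'I_2 := ord0. pose y : 'I_2 := ord_max.
have Hxx : #|Defs.Hom C x x| = 1 by rewrite HC mx2E.
have Hxy : #|Defs.Hom C x y| = b by rewrite HC mx2E.
have Hyx : #|Defs.Hom C y x| = c by rewrite HC mx2E.
have Hyy : #|Defs.Hom C y y| = d by rewrite HC mx2E.
have sing : forall u v : Defs.Hom C x x, u = v.
  move=> u v; have /fintype_le1P h : #|Defs.Hom C x x| <= 1 by rewrite Hxx.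
  by rewrite (h u) (h v).
have fg : forall (f : Defs.Hom C x y) (g : Defs.Hom C y x), Defs.comp f g = Defs.idm C x.
  by move=> f g; apply: sing.
pose phi := fun p : Defs.Hom C x y * Defs.Hom C y x => Defs.comp p.2 p.1.
have phi_inj : injective phi.
  move=> [f g] [f' g']; rewrite /phi /= => e.
  have ef : f = f'.
    have e1 : Defs.comp f (Defs.comp g f) = f by rewrite -Defs.comp_assoc fg Defs.comp_id_l.
    have e2 : Defs.comp f (Defs.comp g' f') = f' by rewrite -Defs.comp_assoc fg Defs.comp_id_l.
    by rewrite -e1 e e2.
  have eg : g = g'.
    have e1 : Defs.comp (Defs.comp g f) g = g by rewrite Defs.comp_assoc fg Defs.comp_id_r.
    have e2 : Defs.comp (Defs.comp g' f') g = g' by rewrite Defs.comp_assoc fg Defs.comp_id_r.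
    by rewrite -e1 e e2.
  by rewrite ef eg.
have le := leq_card phi phi_inj.
rewrite card_prod Hxy Hyx Hyy in le.
rewrite leq_eqVlt in le; case/orP: le => [/eqP E|]; last by right.
left.
have onto : Defs.idm C y \in codom phi.
  by apply: inj_card_onto => //; rewrite card_prod Hxy Hyx Hyy E.
case/codomP: onto => [[f g]]; rewrite /phi /= => e.
have all1 : forall h : Defs.Hom C y y, h = Defs.idm C y.
  move=> h.
  have -> : h = Defs.comp (Defs.idm C y) (Defs.comp h (Defs.idm C y))
    by rewrite Defs.comp_id_l Defs.comp_id_r.
  rewrite e.
  have -> : Defs.comp (Defs.comp g f) (Defs.comp h (Defs.comp g f)) =
     Defs.comp g (Defs.comp (Defs.comp (Defs.comp f h) g) f) by rewrite !Defs.comp_assoc.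
  by rewrite fg Defs.comp_id_l.
have d1 : d <= 1.
  rewrite -Hyy; apply/fintype_le1P => u v; by rewrite (all1 u) (all1 v).
have : 0 < d by rewrite -Hyy; apply/card_gt0P; exists (Defs.idm C y).
move=> d0; have d_1 : d = 1 by lia.
split => //; move: E; rewrite d_1 => /eqP; rewrite muln_eq1 => /andP[/eqP -> /eqP ->]; by [].
Qed.

Lemma swapE a b c d : (\matrix_(i, j) mx2 a b c d (rev_ord i) (rev_ord j))%R = mx2 d c b a.
Proof.
apply/matrixP => i j; rewrite mxE !mx2E.
by case: i => [[|[|i]] Hi]; case: j => [[|[|j]] Hj].
Qed.

Lemma swap_mx2 a b c d : Cat_nonempty (mx2 a b c d) -> Cat_nonempty (mx2 d c b a).
Proof. by move/(swap_cat (fun i : 'I_2 => rev_ord i)); rewrite swapE. Qed.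

Lemma case1 : Cat_nonempty (mx2 1 1 1 1).
Proof.
apply: (@build_cat 2 _ (fun _ _ _ _ _ => 0)) => //.
- by move=> i; rewrite mx2E; case: (val i) => [|[|]].
- by move=> i j k f g _ _; rewrite mx2E; case: (val i) => [|[|]]; case: (val k) => [|[|]].
- move=> i j f; rewrite mx2E; case: (val i) => [|[|]]; case: (val j) => [|[|]]; by case: f.
- move=> i j f; rewrite mx2E; case: (val i) => [|[|]]; case: (val j) => [|[|]]; by case: f.
Qed.

Theorem mainTheorem2 (a b c d : nat) :
  1 <= a -> 1 <= b -> 1 <= c -> 1 <= d ->
  (Cat_nonempty (mx2 a b c d) <->
    [\/ (a = 1 /\ b = 1 /\ c = 1 /\ d = 1),
        (a = 1 /\ b * c < d),
        (d = 1 /\ b * c < a) |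
        (1 < a /\ 1 < d)]).
Proof.
move=> ha hb hc hd; split.
- move=> H.
  have [a1|a1] : a = 1 \/ 1 < a by lia.
  + subst a; case: (nec H) => [[-> [-> ->]]|h].
    * by apply: Or41.
    * by apply: Or42.
  + have [d1|d1] : d = 1 \/ 1 < d by lia.
    * subst d; case: (nec (swap_mx2 H)) => [[ea _]|h]; first by lia.
      by apply: Or43; split => //; rewrite mulnC.
    * by apply: Or44.
- case=> [[-> [-> [-> ->]]]|[-> h]|[-> h]|[h1 h2]].
  + exact: case1.
  + exact: case2.
  + apply: swap_mx2; apply: case2 => //; by rewrite mulnC.
  + exact: case4.
Qed.
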